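(* Let $n\in\mathbb{N}_+$, $n\ge 3$, and for $x\in[0,1]$ let \[ \Phi_n(x):=(n+1)\int_0^1 \left(t^2+(1-t)^2\right)\frac{(nx-3)t^2(1-t)^{n-2}-(nx-2)t^3(1-t)^{n-3}+t^{nx}(1-t)^{n(1-x)}}{(1-2t)^2}\,dt. \] Then $\Phi_n$ is convex on $[0,1]$ and \[ -\frac{4}{n}\le \Phi_n(x)\le\frac{16}{n},\quad x\in\left[\frac1n,1-\frac1n\right]. \] *)

(* Defs.v *)
From Stdlib Require Import Reals.
From Coquelicot Require Import Coquelicot.
Open Scope R_scope.

(* Real powers t^{nx} and (1-t)^{n(1-x)} are written with Rpower (correct for
   0 < t < 1; the endpoint values t = 0, 1 and the removable point t = 1/2
   do not affect the Riemann integral). *)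
Definition Phi_integrand (n : nat) (x t : R) : R :=
  (t ^ 2 + (1 - t) ^ 2) *
  (((INR n * x - 3) * t ^ 2 * (1 - t) ^ (n - 2)
    - (INR n * x - 2) * t ^ 3 * (1 - t) ^ (n - 3)
    + Rpower t (INR n * x) * Rpower (1 - t) (INR n * (1 - x)))
   / (1 - 2 * t) ^ 2).

Definition Phi (n : nat) (x : R) : R :=
  (INR n + 1) * RInt (Phi_integrand n x) 0 1.

Definition convex_on (f : R -> R) (a b : R) : Prop :=
  forall x y l, a <= x <= b -> a <= y <= b -> 0 <= l <= 1 ->
    f (l * x + (1 - l) * y) <= l * f x + (1 - l) * f y.

(* Main.v *)
Require Import Defs.
From Stdlib Require Import Reals.
From Coquelicot Require Import Coquelicot.
From Stdlib Require Import Lra Lia Factorial.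
Open Scope R_scope.

Lemma exp_convex p q l : 0 <= l <= 1 ->
  exp (l * p + (1 - l) * q) <= l * exp p + (1 - l) * exp q.
Proof.
  intros Hl. set (z := l * p + (1 - l) * q).
  assert (H1 : exp p = exp z * exp (p - z)) by (rewrite <- exp_plus; f_equal; ring).
  assert (H2 : exp q = exp z * exp (q - z)) by (rewrite <- exp_plus; f_equal; ring).
  pose proof (exp_ineq1_le (p - z)). pose proof (exp_ineq1_le (q - z)).
  pose proof (exp_pos z).
  rewrite H1, H2.
  assert (l * (p - z) + (1 - l) * (q - z) = 0) by (unfold z; ring).
  assert (l * exp (p - z) + (1 - l) * exp (q - z) >= 1) by nra.
  assert (exp z * (l * exp (p - z) + (1 - l) * exp (q - z)) >= exp z * 1) by
    (apply Rle_ge, Rmult_le_compat_l; lra).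
  nra.
Qed.

Lemma Rpower_prod_exp t u a b :
  Rpower t a * Rpower u b = exp (a * ln t + b * ln u).
Proof. unfold Rpower. rewrite exp_plus. reflexivity. Qed.

Lemma pw_cvx n x y l t : 0 <= l <= 1 ->
  Phi_integrand n (l * x + (1 - l) * y) t <=
  l * Phi_integrand n x t + (1 - l) * Phi_integrand n y t.
Proof.
  intros Hl. unfold Phi_integrand. rewrite !Rpower_prod_exp.
  set (W := t ^ 2 + (1 - t) ^ 2).
  set (A := t ^ 2 * (1 - t) ^ (n - 2)).
  set (B := t ^ 3 * (1 - t) ^ (n - 3)).
  set (p := INR n * x * ln t + INR n * (1 - x) * ln (1 - t)).
  set (q := INR n * y * ln t + INR n * (1 - y) * ln (1 - t)).
  assert (Hz : INR n * (l * x + (1 - l) * y) * ln t + INR n * (1 - (l * x + (1 - l) * y)) * ln (1 - t)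
     = l * p + (1 - l) * q) by (unfold p, q; ring).
  rewrite Hz.
  assert (HW : 0 <= W) by (unfold W; nra).
  assert (HK : 0 <= / (1 - 2 * t) ^ 2).
  { destruct (Req_dec (1 - 2 * t) 0) as [E|E].
    - rewrite E, pow_i by lia. rewrite Rinv_0. lra.
    - apply Rlt_le, Rinv_0_lt_compat. apply pow2_gt_0. exact E. }
  pose proof (exp_convex p q l Hl) as Hc.
  unfold Rdiv. set (K := / (1 - 2 * t) ^ 2) in *.
  assert (HA : forall X : R, W * (X * K) = W * K * X) by (intros; ring).
  rewrite !HA.
  assert (W * K * (l * exp p + (1 - l) * exp q - exp (l * p + (1 - l) * q)) >= 0).
  { apply Rle_ge, Rmult_le_pos; [apply Rmult_le_pos; auto | lra]. }
  rewrite !Rmult_assoc in *. nra.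
Qed.

Lemma RInt_lin (f g : R -> R) a b l m : ex_RInt f a b -> ex_RInt g a b ->
  is_RInt (fun t => l * f t + m * g t) a b (l * RInt f a b + m * RInt g a b).
Proof.
  intros Hf Hg.
  exact (is_RInt_plus _ _ _ _ _ _ (is_RInt_scal _ _ _ l _ (RInt_correct _ _ _ Hf))
                                  (is_RInt_scal _ _ _ m _ (RInt_correct _ _ _ Hg))).
Qed.

Lemma cvx_of_int n :
  (forall x, 0 <= x <= 1 -> ex_RInt (Phi_integrand n x) 0 1) -> convex_on (Phi n) 0 1.
Proof.
  intros Hint x y l Hx Hy Hl. unfold Phi.
  assert (Hz : 0 <= l * x + (1 - l) * y <= 1) by nra.
  pose proof (RInt_lin _ _ 0 1 l (1 - l) (Hint x Hx) (Hint y Hy)) as HL.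
  assert (RInt (Phi_integrand n (l * x + (1 - l) * y)) 0 1 <=
          l * RInt (Phi_integrand n x) 0 1 + (1 - l) * RInt (Phi_integrand n y) 0 1).
  { rewrite <- (is_RInt_unique _ _ _ _ HL). apply RInt_le; [lra | apply Hint; exact Hz | eexists; exact HL |].
    intros t _. apply pw_cvx; exact Hl. }
  assert (0 <= INR n + 1) by (pose proof (pos_INR n); lra).
  nra.
Qed.

Lemma final_bounds (n : nat) (hn : (3 <= n)%nat) (F : R -> R) :
  convex_on F 0 1 ->
  F (1 / INR n) <= 4 / INR n -> F (2 / INR n) = 0 -> F (3 / INR n) = 0 ->
  F (1 - 1 / INR n) <= 16 / INR n ->
  forall x, 1 / INR n <= x <= 1 - 1 / INR n -> - (4 / INR n) <= F x <= 16 / INR n.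
Proof.
  intros cvx V1 V2 V3 V4 x Hx.
  assert (HN : 3 <= INR n) by (replace 3 with (INR 3) by (simpl; ring); apply le_INR; exact hn).
  set (N := INR n) in *.
  assert (HN0 : N <> 0) by lra.
  assert (Hi : forall k, 0 <= k <= 3 -> 0 <= k / N <= 1).
  { intros k Hk. split; [apply Rdiv_le_0_compat; lra|]. apply Rmult_le_reg_r with N; [lra|].
    unfold Rdiv. rewrite Rmult_assoc, Rinv_l by exact HN0. lra. }
  assert (H1 := Hi 1 ltac:(lra)). assert (H2 := Hi 2 ltac:(lra)). assert (H3 := Hi 3 ltac:(lra)).
  assert (HxN : 1 <= N * x <= N - 1).
  { destruct Hx as [Ha Hb]. split.
    - apply Rmult_le_compat_l with (r := N) in Ha; [|lra]. replace (N * (1 / N)) with 1 in Ha by (field; lra). lra.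
    - apply Rmult_le_compat_l with (r := N) in Hb; [|lra]. replace (N * (1 - 1 / N)) with (N - 1) in Hb by (field; lra). lra. }
  assert (Hx01 : 0 <= x <= 1).
  { split; apply Rmult_le_reg_l with N; lra. }
  assert (Hm : 0 <= 1 - 1 / N <= 1) by (split; [|lra]; replace (1 - 1 / N) with ((N - 1) / N) by (field; lra);
     apply Rdiv_le_0_compat; lra).
  split.
  -
    destruct (Rle_lt_dec (N * x) 2) as [Hle2|Hgt2].
    + (* x <= 2/N : 2/N is a combination of x and 3/N *)
      set (mu := 1 / (3 - N * x)).
      assert (Hmu : 0 < mu <= 1).
      { unfold mu. split. apply Rdiv_lt_0_compat; lra.
        apply Rmult_le_reg_r with (3 - N * x); [lra|]. unfold Rdiv. rewrite Rmult_assoc, Rinv_l by lra. lra. }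
      pose proof (cvx x (3 / N) mu Hx01 H3 ltac:(lra)) as C.
      replace (mu * x + (1 - mu) * (3 / N)) with (2 / N) in C by (unfold mu; field; lra).
      rewrite V2, V3 in C.
      assert (0 <= F x) by nra.
      assert (0 < 4 / N) by (apply Rdiv_lt_0_compat; lra). lra.
    + destruct (Rle_lt_dec (N * x) 3) as [Hle3|Hgt3].
      * set (mu := 1 / (N * x - 1)).
        assert (Hmu : 0 < mu <= 1).
        { unfold mu. split. apply Rdiv_lt_0_compat; lra.
          apply Rmult_le_reg_r with (N * x - 1); [lra|]. unfold Rdiv. rewrite Rmult_assoc, Rinv_l by lra. lra. }
        pose proof (cvx x (1 / N) mu Hx01 H1 ltac:(lra)) as C.
        replace (mu * x + (1 - mu) * (1 / N)) with (2 / N) in C by (unfold mu; field; lra).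
        rewrite V2 in C.
        assert (E1 : (N * x - 1) * mu = 1) by (unfold mu; field; lra).
        assert (E2 : (N * x - 1) * (1 - mu) = N * x - 2) by (unfold mu; field; lra).
        assert (0 <= (N * x - 1) * (mu * F x + (1 - mu) * F (1 / N))) by (apply Rmult_le_pos; lra).
        assert (0 <= F x + (N * x - 2) * F (1 / N)) by
          (replace (F x + (N * x - 2) * F (1 / N)) with ((N * x - 1) * (mu * F x + (1 - mu) * F (1 / N)))
            by (rewrite <- E2; replace (F x) with ((N * x - 1) * mu * F x) at 2 by (rewrite E1; ring); ring); lra).
        assert (0 <= 4 / N) by (apply Rdiv_le_0_compat; lra).
        destruct (Rle_lt_dec 0 (F (1 / N))); nra.
      * set (mu := 1 / (N * x - 2)).
        assert (Hmu : 0 < mu <= 1).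
        { unfold mu. split. apply Rdiv_lt_0_compat; lra.
          apply Rmult_le_reg_r with (N * x - 2); [lra|]. unfold Rdiv. rewrite Rmult_assoc, Rinv_l by lra. lra. }
        pose proof (cvx x (2 / N) mu Hx01 H2 ltac:(lra)) as C.
        replace (mu * x + (1 - mu) * (2 / N)) with (3 / N) in C by (unfold mu; field; lra).
        rewrite V2, V3 in C.
        assert (0 <= F x) by nra.
        assert (0 < 4 / N) by (apply Rdiv_lt_0_compat; lra). lra.
  -
    set (lam := ((N - 1) - N * x) / (N - 2)).
    assert (Hlam : 0 <= lam <= 1).
    { unfold lam. split. apply Rdiv_le_0_compat; lra.
      apply Rmult_le_reg_r with (N - 2); [lra|]. unfold Rdiv. rewrite Rmult_assoc, Rinv_l by lra. lra. }
    pose proof (cvx (1 / N) (1 - 1 / N) lam H1 Hm Hlam) as C.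
    replace (lam * (1 / N) + (1 - lam) * (1 - 1 / N)) with x in C by (unfold lam; field; lra).
    assert (4 / N <= 16 / N) by (unfold Rdiv; apply Rmult_le_compat_r; [apply Rlt_le, Rinv_0_lt_compat|]; lra).
    nra.
Qed.
Definition cexp (k : nat) : R := / INR (fact k).
Definition Ef (z : R) : R := PSeries (PS_decr_n cexp 2) z.

Lemma INR_fact_pos k : 0 < INR (fact k).
Proof. apply lt_0_INR, lt_O_fact. Qed.

Lemma CV_Ef : CV_radius (PS_decr_n cexp 2) = p_infty.
Proof.
  apply CV_radius_infinite_DAlembert.
  - intros k. unfold PS_decr_n, cexp. apply Rinv_neq_0_compat. pose proof (INR_fact_pos (2 + k)); lra.
  - apply is_lim_seq_ext with (u := fun k => / INR (k + 3)).
    + intros k. unfold PS_decr_n, cexp.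
      replace (2 + S k)%nat with (S (2 + k)) by lia.
      rewrite fact_simpl, mult_INR.
      pose proof (INR_fact_pos (2 + k)).
      replace (k + 3)%nat with (S (2 + k)) by lia.
      assert (0 < INR (S (2 + k))) by (apply lt_0_INR; lia).
      rewrite Rabs_pos_eq.
      * field. lra.
      * apply Rlt_le. unfold Rdiv. apply Rmult_lt_0_compat; apply Rinv_0_lt_compat; try lra; try nra.
        apply Rinv_0_lt_compat; nra.
    + replace (Finite 0) with (Rbar_inv p_infty) by reflexivity.
      apply is_lim_seq_inv; [|discriminate].
      apply (is_lim_seq_incr_n INR 3 p_infty). exact is_lim_seq_INR.
Qed.

Lemma Ef_der z : ex_derive Ef z.
Proof. unfold Ef. apply ex_derive_PSeries. rewrite CV_Ef. exact I. Qed.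

Lemma exp_expand z : exp z = 1 + z + z ^ 2 * Ef z.
Proof.
  assert (H : is_pseries cexp z (exp z)).
  { apply is_pseries_Reals. unfold Pser, cexp. unfold exp. destruct (exist_exp z) as [l Hl]. simpl. exact Hl. }
  rewrite <- (is_pseries_unique _ _ _ H).
  rewrite (PSeries_decr_n cexp 1 z (ex_intro _ _ H)).
  unfold Ef. simpl. unfold cexp. simpl. field.
Qed.

Definition Lg (t : R) : R := ln t - ln (1 - t).
Definition Dg (z : R) : R := 1 + z * Ef z.

Lemma exp_Dg z : exp z = 1 + z * Dg z.
Proof. rewrite exp_expand. unfold Dg. ring. Qed.

Lemma Dg_pos z : 0 < Dg z.
Proof.
  pose proof (exp_Dg z) as H.
  destruct (Rtotal_order z 0) as [Hz|[Hz|Hz]].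
  - assert (exp z < 1) by (rewrite <- exp_0; apply exp_increasing; exact Hz).
    destruct (Rle_lt_dec (Dg z) 0); [nra|lra].
  - subst. unfold Dg. lra.
  - assert (1 + z < exp z) by (apply exp_ineq1; lra).
    destruct (Rle_lt_dec (Dg z) 0); [nra|lra].
Qed.

Definition Gf (n : nat) (x t : R) : R :=
  let m := INR n * x - 2 in
  (t ^ 2 + (1 - t) ^ 2) * (1 - t) ^ (n - 2) * exp (2 * Lg t) *
  (m ^ 2 * Ef (m * Lg t) - m * Ef (Lg t)) / (Dg (Lg t)) ^ 2.

Lemma G_eq n x t : (3 <= n)%nat -> 0 < t < 1 -> t <> 1 / 2 ->
  Phi_integrand n x t = Gf n x t.
Proof.
  intros hn Ht Hh. unfold Phi_integrand, Gf.
  set (u := 1 - t). assert (Hu : 0 < u) by (unfold u; lra).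
  set (L := Lg t). set (m := INR n * x - 2).
  set (r := exp L).
  assert (Hr : t = u * r).
  { unfold r, L, Lg. unfold Rminus at 1. rewrite exp_plus, exp_Ropp, !exp_ln by lra. fold u. field. lra. }
  assert (HL : L <> 0).
  { intro E. unfold L, Lg in E. assert (ln t = ln (1 - t)) by lra.
    apply ln_inv in H; lra. }
  set (U3 := u ^ (n - 3)).
  assert (HU2 : u ^ (n - 2) = u * U3).
  { unfold U3. replace (n - 2)%nat with (S (n - 3)) by lia. reflexivity. }
  assert (Hun : exp (INR n * ln u) = u ^ 3 * U3).
  { change (Rpower u (INR n) = u ^ 3 * U3). rewrite Rpower_pow by exact Hu.
    unfold U3. rewrite <- pow_add. f_equal. lia. }
  assert (HP : Rpower t (INR n * x) * Rpower u (INR n * (1 - x)) = u ^ 3 * U3 * (r ^ 2 * exp (m * L))).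
  { rewrite Rpower_prod_exp.
    replace (INR n * x * ln t + INR n * (1 - x) * ln u) with (INR n * ln u + (L + L + m * L))
      by (unfold m, L, Lg; fold u; ring).
    rewrite exp_plus, Hun, !exp_plus. fold r. ring. }
  assert (H2L : exp (2 * L) = r ^ 2) by (replace (2 * L) with (L + L) by ring; rewrite exp_plus; fold r; ring).
  rewrite H2L. fold u. rewrite HP, HU2.
  pose proof (Dg_pos L) as HD.
  assert (Hr1 : r = 1 + L * Dg L) by (unfold r; apply exp_Dg).
  assert (Hem : exp (m * L) = 1 + m * L + (m * L) ^ 2 * Ef (m * L)) by apply exp_expand.
  assert (HDg : Dg L = 1 + L * Ef L) by reflexivity.
  rewrite Hem.
  replace (1 - 2 * t) with (u - t) by (unfold u; ring).
  set (W := t ^ 2 + u ^ 2).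
  replace (INR n * x - 3) with (m - 1) by (unfold m; ring).
  replace (INR n * x - 2) with m by (unfold m; ring).
  rewrite Hr. rewrite Hr1. rewrite HDg.
  assert (HD' : 1 + L * Ef L <> 0) by (rewrite <- HDg; lra).
  set (E1 := Ef L) in *. set (Em := Ef (m * L)).
  assert (u - u * (1 + L * (1 + L * E1)) <> 0).
  { replace (u - u * (1 + L * (1 + L * E1))) with (- (u * L * (1 + L * E1))) by ring.
    apply Ropp_neq_0_compat. repeat apply Rmult_integral_contrapositive_currified; auto; lra. }
  field. repeat split; try lra; auto.
Qed.

Definition Pw (a t : R) : R :=
  if Rlt_dec 0 t then Rpower t a else (if Req_EM_T a 0 then 1 else 0).

Lemma Rpower_cont a z : 0 < z -> continuous (fun t => Rpower t a) z.
Proof. intros Hz. apply (@ex_derive_continuous R_AbsRing R_NormedModule). unfold Rpower. auto_derive. lra. Qed.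

Lemma Pw_cont a z : 0 <= a -> 0 <= z -> continuous (Pw a) z.
Proof.
  intros Ha Hz. destruct (Req_dec a 0) as [E|E].
  - subst a. apply continuous_ext with (f := fun _ => 1).
    + intros t. unfold Pw. destruct (Rlt_dec 0 t).
      * unfold Rpower. rewrite Rmult_0_l, exp_0. reflexivity.
      * destruct (Req_EM_T 0 0); [reflexivity|congruence].
    + apply continuous_const.
  - destruct (Rlt_dec 0 z) as [Hz'|Hz'].
    + apply continuous_ext_loc with (g := fun t => Rpower t a).
      * exists (mkposreal z Hz'). intros y Hy. unfold Pw.
        destruct (Rlt_dec 0 y) as [|n0]; [reflexivity|].
        exfalso. apply n0. unfold ball in Hy. simpl in Hy. unfold AbsRing_ball, abs, minus, plus, opp in Hy. simpl in Hy.
        apply Rabs_def2 in Hy. lra.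
      * apply Rpower_cont; exact Hz'.
    + assert (z = 0) by lra. subst z.
      assert (Ha' : 0 < a) by lra.
      apply continuity_pt_filterlim.
      unfold continuity_pt, continue_in, limit1_in, limit_in. intros eps Heps.
      exists (Rpower eps (/ a)). split.
      { unfold Rpower. apply exp_pos. }
      intros y [_ Hy]. simpl in Hy. unfold R_dist in *.
      unfold Pw. destruct (Rlt_dec 0 0) as [h|_]; [lra|].
      destruct (Req_EM_T a 0) as [h|_]; [lra|].
      destruct (Rlt_dec 0 y) as [Hy0|Hy0].
      * rewrite Rminus_0_r in *. rewrite Rabs_pos_eq in Hy by lra.
        simpl. unfold R_dist. rewrite Rminus_0_r. rewrite Rabs_pos_eq by (unfold Rpower; apply Rlt_le, exp_pos).
        replace eps with (Rpower (Rpower eps (/ a)) a).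
        2:{ rewrite Rpower_mult. rewrite Rinv_l by lra. apply Rpower_1. exact Heps. }
        apply Rlt_Rpower_l; [exact Ha'|]. lra.
      * simpl. unfold R_dist. rewrite Rminus_0_r, Rabs_R0. exact Heps.
Qed.

Lemma cont_of_der (f : R -> R) z : ex_derive f z -> continuous f z.
Proof. apply (@ex_derive_continuous R_AbsRing R_NormedModule). Qed.

Lemma Gf_cont n x z : 1/4 <= z <= 3/4 -> continuous (Gf n x) z.
Proof.
  intros Hz. apply cont_of_der. unfold Gf, Lg, Dg. auto_derive.
  repeat split; try lra; try apply Ef_der.
  pose proof (Dg_pos (ln z - ln (1 - z))) as H. unfold Dg in H.
  replace (1 + (ln z + - ln (1 + - z)) * Ef (ln z + - ln (1 + - z))) with
    (1 + (ln z - ln (1 - z)) * Ef (ln z - ln (1 - z))) by (f_equal; unfold Rminus; reflexivity).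
  nra.
Qed.

Lemma ex_RInt_cont_R (f : R -> R) a b :
  (forall z, Rmin a b <= z <= Rmax a b -> continuous f z) -> ex_RInt f a b.
Proof. apply (@ex_RInt_continuous R_CompleteNormedModule). Qed.

Definition linp (n : nat) (x t : R) : R :=
  (INR n * x - 3) * t ^ 2 * (1 - t) ^ (n - 2) - (INR n * x - 2) * t ^ 3 * (1 - t) ^ (n - 3).

Lemma int_left n x : 0 <= x <= 1 -> ex_RInt (Phi_integrand n x) 0 (1/4).
Proof.
  intros Hx.
  set (a := INR n * x). set (b := INR n * (1 - x)).
  assert (Ha : 0 <= a) by (unfold a; pose proof (pos_INR n); nra).
  set (A := fun t => (t ^ 2 + (1 - t) ^ 2) * linp n x t / (1 - 2 * t) ^ 2).
  set (B := fun t => (t ^ 2 + (1 - t) ^ 2) * Rpower (1 - t) b / (1 - 2 * t) ^ 2).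
  apply ex_RInt_ext with (f := fun t => A t + B t * Pw a t).
  { intros t Ht. rewrite Rmin_left, Rmax_right in Ht by lra.
    unfold A, B, Pw, Phi_integrand, linp. destruct (Rlt_dec 0 t) as [_|h]; [|lra].
    fold a b. unfold Rdiv. match goal with |- ?l = ?r => change (@eq R l r) end. ring. }
  apply ex_RInt_cont_R. intros z Hz. rewrite Rmin_left, Rmax_right in Hz by lra.
  apply (continuous_plus A (fun t => B t * Pw a t)).
  - apply cont_of_der. unfold A, linp. auto_derive. repeat split; nra.
  - apply (continuous_mult B (Pw a)).
    + apply cont_of_der. unfold B, Rpower. auto_derive. repeat split; nra.
    + apply Pw_cont; lra.
Qed.

Lemma int_right n x : 0 <= x <= 1 -> ex_RInt (Phi_integrand n x) (3/4) 1.
Proof.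
  intros Hx.
  set (a := INR n * x). set (b := INR n * (1 - x)).
  assert (Hb : 0 <= b) by (unfold b; pose proof (pos_INR n); nra).
  set (A := fun t => (t ^ 2 + (1 - t) ^ 2) * linp n x t / (1 - 2 * t) ^ 2).
  set (B := fun t => (t ^ 2 + (1 - t) ^ 2) * Rpower t a / (1 - 2 * t) ^ 2).
  apply ex_RInt_ext with (f := fun t => A t + B t * Pw b (1 - t)).
  { intros t Ht. rewrite Rmin_left, Rmax_right in Ht by lra.
    unfold A, B, Pw, Phi_integrand, linp. destruct (Rlt_dec 0 (1 - t)) as [_|h]; [|lra].
    fold a b. unfold Rdiv. match goal with |- ?l = ?r => change (@eq R l r) end. ring. }
  apply ex_RInt_cont_R. intros z Hz. rewrite Rmin_left, Rmax_right in Hz by lra.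
  apply (continuous_plus A (fun t => B t * Pw b (1 - t))).
  - apply cont_of_der. unfold A, linp. auto_derive. repeat split; nra.
  - apply (continuous_mult B (fun t => Pw b (1 - t))).
    + apply cont_of_der. unfold B, Rpower. auto_derive. repeat split; nra.
    + apply (continuous_comp (fun t => 1 - t) (Pw b)).
      * apply cont_of_der. auto_derive. exact I.
      * apply Pw_cont; lra.
Qed.

Lemma int_Phi n x : (3 <= n)%nat -> 0 <= x <= 1 -> ex_RInt (Phi_integrand n x) 0 1.
Proof.
  intros hn Hx.
  assert (M1 : ex_RInt (Phi_integrand n x) (1/4) (1/2)).
  { apply ex_RInt_ext with (f := Gf n x).
    - intros t Ht. rewrite Rmin_left, Rmax_right in Ht by lra. symmetry. apply G_eq; auto; lra.
    - apply ex_RInt_cont_R. intros z Hz. rewrite Rmin_left, Rmax_right in Hz by lra. apply Gf_cont; lra. }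
  assert (M2 : ex_RInt (Phi_integrand n x) (1/2) (3/4)).
  { apply ex_RInt_ext with (f := Gf n x).
    - intros t Ht. rewrite Rmin_left, Rmax_right in Ht by lra. symmetry. apply G_eq; auto; lra.
    - apply ex_RInt_cont_R. intros z Hz. rewrite Rmin_left, Rmax_right in Hz by lra. apply Gf_cont; lra. }
  apply ex_RInt_Chasles with (1/4); [apply int_left; auto|].
  apply ex_RInt_Chasles with (1/2); [exact M1|].
  apply ex_RInt_Chasles with (3/4); [exact M2|].
  apply int_right; auto.
Qed.

Lemma RInt_FTC (F f : R -> R) :
  (forall t : R, is_derive F t (f t)) -> (forall t : R, continuous f t) -> RInt f 0 1 = F 1 - F 0.
Proof.
  intros HD HC. apply (@is_RInt_unique R_CompleteNormedModule).
  apply (@is_RInt_derive R_CompleteNormedModule F f 0 1); intros; auto.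
Qed.

Definition beta (p q : nat) : R := RInt (fun t => t ^ p * (1 - t) ^ q) 0 1.

Lemma beta_ex p q : ex_RInt (fun t => t ^ p * (1 - t) ^ q) 0 1.
Proof. apply ex_RInt_cont_R. intros z _. apply cont_of_der. auto_derive. exact I. Qed.

Lemma beta_0 p : beta p 0 = / INR (S p).
Proof.
  unfold beta. rewrite (RInt_FTC (fun t => t ^ (S p) / INR (S p))).
  - rewrite pow1, pow_i by lia. pose proof (lt_0_INR (S p) ltac:(lia)). field. lra.
  - intros t. auto_derive; [exact I|].
    change (match p with 0%nat => 1 | S _ => INR p + 1 end) with (INR (S p)).
    pose proof (lt_0_INR (S p) ltac:(lia)). simpl pow at 2. field. lra.
  - intros t. apply cont_of_der. auto_derive. exact I.
Qed.

Lemma beta_rec p q : INR (S p) * beta p (S q) = INR (S q) * beta (S p) q.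
Proof.
  assert (H := RInt_lin _ _ 0 1 (INR (S p)) (- INR (S q)) (beta_ex p (S q)) (beta_ex (S p) q)).
  apply (@is_RInt_unique R_CompleteNormedModule) in H. cbv beta in H.
  rewrite (RInt_FTC (fun t => t ^ (S p) * (1 - t) ^ (S q))) in H.
  - rewrite pow1, Rminus_diag, !pow_i in H by lia. unfold beta. lra.
  - intros t. auto_derive; [exact I|].
    change (match p with 0%nat => 1 | S _ => INR p + 1 end) with (INR (S p)).
    change (match q with 0%nat => 1 | S _ => INR q + 1 end) with (INR (S q)).
    simpl pow. match goal with |- ?l = ?r => change (@eq R l r) end. unfold Rminus. set (Z := t ^ p). set (Y := (1 + - t) ^ q). ring.
  - intros t. apply cont_of_der. auto_derive. exact I.
Qed.

Lemma beta_val q : forall p, beta p q = INR (fact p) * INR (fact q) / INR (fact (S (p + q))).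
Proof.
  induction q as [|q IH]; intros p.
  - rewrite beta_0. rewrite Nat.add_0_r. simpl (fact 0). rewrite fact_simpl, mult_INR.
    pose proof (INR_fact_pos p). pose proof (lt_0_INR (S p) ltac:(lia)). simpl (INR 1). field. lra.
  - pose proof (beta_rec p q) as H. rewrite IH in H.
    pose proof (lt_0_INR (S p) ltac:(lia)) as HSp.
    replace (S (S p + q)) with (S (p + S q)) in H by lia.
    apply (Rmult_eq_reg_l (INR (S p))); [|lra].
    rewrite H. rewrite (fact_simpl p), (fact_simpl q), !mult_INR.
    pose proof (INR_fact_pos (S (p + S q))). field. lra.
Qed.

Lemma RInt_ext_split (f g : R -> R) :
  (forall t, 0 < t < 1 -> t <> 1/2 -> f t = g t) -> ex_RInt g 0 1 -> RInt f 0 1 = RInt g 0 1.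
Proof.
  intros H Hg.
  assert (G1 : ex_RInt g 0 (1/2)) by (apply (@ex_RInt_Chasles_1 R_CompleteNormedModule) with 1; [lra|exact Hg]).
  assert (G2 : ex_RInt g (1/2) 1) by (apply (@ex_RInt_Chasles_2 R_CompleteNormedModule) with 0; [lra|exact Hg]).
  assert (E1 : forall x, Rmin 0 (1/2) < x < Rmax 0 (1/2) -> g x = f x).
  { intros x Hx. rewrite Rmin_left, Rmax_right in Hx by lra. symmetry. apply H; lra. }
  assert (E2 : forall x, Rmin (1/2) 1 < x < Rmax (1/2) 1 -> g x = f x).
  { intros x Hx. rewrite Rmin_left, Rmax_right in Hx by lra. symmetry. apply H; lra. }
  assert (F1 := ex_RInt_ext _ _ _ _ E1 G1). assert (F2 := ex_RInt_ext _ _ _ _ E2 G2).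
  rewrite <- (@RInt_Chasles R_CompleteNormedModule f 0 (1/2) 1 F1 F2).
  rewrite <- (@RInt_Chasles R_CompleteNormedModule g 0 (1/2) 1 G1 G2).
  rewrite (RInt_ext f g 0 (1/2)), (RInt_ext f g (1/2) 1); [reflexivity| |];
    intros x Hx; symmetry; [apply E2|apply E1]; exact Hx.
Qed.

Lemma RInt_zero_ext (f : R -> R) : (forall t, 0 < t < 1 -> f t = 0) -> RInt f 0 1 = 0.
Proof.
  intros H. rewrite (RInt_ext f (fun _ => 0)).
  - rewrite RInt_const. unfold scal; simpl; unfold mult; simpl. ring.
  - intros x Hx. rewrite Rmin_left, Rmax_right in Hx by lra. apply H; lra.
Qed.

Lemma INR_n_ne0 n : (3 <= n)%nat -> INR n <> 0.
Proof. intros. apply not_0_INR. lia. Qed.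

Lemma Phi_2 n : (3 <= n)%nat -> Phi n (2 / INR n) = 0.
Proof.
  intros hn. unfold Phi. rewrite RInt_zero_ext; [ring|].
  intros t Ht. unfold Phi_integrand.
  pose proof (INR_n_ne0 n hn).
  replace (INR n * (2 / INR n)) with (INR 2) by (simpl; field; auto).
  replace (INR n * (1 - 2 / INR n)) with (INR (n - 2)) by (rewrite minus_INR by lia; simpl; field; auto).
  rewrite !Rpower_pow by lra. simpl (INR 2).
  set (U := (1 - t) ^ (n - 2)). set (U' := (1 - t) ^ (n - 3)).
  unfold Rdiv. ring.
Qed.

Lemma Phi_3 n : (3 <= n)%nat -> Phi n (3 / INR n) = 0.
Proof.
  intros hn. unfold Phi. rewrite RInt_zero_ext; [ring|].
  intros t Ht. unfold Phi_integrand.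
  pose proof (INR_n_ne0 n hn).
  replace (INR n * (3 / INR n)) with (INR 3) by (simpl; field; auto).
  replace (INR n * (1 - 3 / INR n)) with (INR (n - 3)) by (rewrite minus_INR by lia; simpl; field; auto).
  rewrite !Rpower_pow by lra. simpl (INR 3).
  set (U := (1 - t) ^ (n - 2)). set (U' := (1 - t) ^ (n - 3)).
  unfold Rdiv. ring.
Qed.

Lemma fact_S_INR m : INR (fact (S m)) = (INR m + 1) * INR (fact m).
Proof. rewrite fact_simpl, mult_INR, S_INR. reflexivity. Qed.

Lemma Phi_1 n : (3 <= n)%nat -> Phi n (1 / INR n) <= 4 / INR n.
Proof.
  intros hn. destruct (Nat.le_exists_sub 3 n hn) as [k [Hk _]]. subst n.
  pose proof (INR_n_ne0 (k + 3) hn) as HN.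
  unfold Phi.
  rewrite (RInt_ext_split _ (fun t => 1 * (t ^ 3 * (1 - t) ^ k) + 1 * (t ^ 1 * (1 - t) ^ (k + 2)))).
  2:{ intros t Ht Hh. unfold Phi_integrand.
      replace (INR (k + 3) * (1 / INR (k + 3))) with (INR 1) by (simpl; field; auto).
      replace (INR (k + 3) * (1 - 1 / INR (k + 3))) with (INR (k + 2))
        by (rewrite !plus_INR; simpl; field; pose proof (pos_INR k); lra).
      rewrite !Rpower_pow by lra.
      replace (k + 3 - 2)%nat with (S k) by lia. replace (k + 3 - 3)%nat with k by lia.
      rewrite pow_add. simpl (INR 1). simpl pow.
      set (U := (1 - t) ^ k).
      assert (1 - 2 * t <> 0) by (intro; apply Hh; lra).
      field. auto. }
  2:{ apply (ex_RInt_ext (fun t => 1 * (t ^ 3 * (1 - t) ^ k) + 1 * (t ^ 1 * (1 - t) ^ (k + 2)))); [reflexivity|].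
      eexists. apply (RInt_lin _ _ 0 1 1 1 (beta_ex 3 k) (beta_ex 1 (k + 2))). }
  rewrite (is_RInt_unique _ _ _ _ (RInt_lin _ _ 0 1 1 1 (beta_ex 3 k) (beta_ex 1 (k + 2)))).
  fold (beta 3 k) (beta 1 (k + 2)). rewrite !beta_val.
  replace (S (3 + k)) with (S (S (S (S k)))) by lia.
  replace (S (1 + (k + 2))) with (S (S (S (S k)))) by lia.
  replace (k + 2)%nat with (S (S k)) by lia.
  rewrite !fact_S_INR. rewrite !plus_INR. rewrite ?S_INR. simpl (INR 0). simpl (INR (fact 0)). simpl (INR 3).
  pose proof (INR_fact_pos k) as Hf. pose proof (pos_INR k) as Hk.
  remember (INR k) as K. remember (INR (fact k)) as F.
  apply Rle_trans with ((K + 4) * (6 * F / ((K + 3) * (K + 2) * (K + 1) * (K + 4) * F) + (K + 2) * (K + 1) * F / ((K + 3) * (K + 2) * (K + 1) * (K + 4) * F))).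
  { right. field. lra. }
  replace ((K + 4) * (6 * F / ((K + 3) * (K + 2) * (K + 1) * (K + 4) * F) + (K + 2) * (K + 1) * F / ((K + 3) * (K + 2) * (K + 1) * (K + 4) * F)))
    with ((6 / ((K + 2) * (K + 1)) + 1) / (K + 3)) by (field; lra).
  replace (0 + 1 + 1 + 1) with 3 by ring. unfold Rdiv. apply Rmult_le_compat_r; [apply Rlt_le, Rinv_0_lt_compat; lra|].
  assert (6 * / ((K + 2) * (K + 1)) <= 3).
  { apply Rmult_le_reg_r with ((K + 2) * (K + 1)); [nra|]. rewrite Rmult_assoc, Rinv_l by nra. nra. }
  simpl. lra.
Qed.

Fixpoint fsum (g : nat -> R) (K : nat) : R :=
  match K with 0%nat => 0 | S K' => fsum g K' + g (S K') end.

Lemma fsum_ext_range g h K : (forall i, (1 <= i <= K)%nat -> g i = h i) -> fsum g K = fsum h K.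
Proof.
  induction K as [|K IH]; intros H; simpl; [reflexivity|].
  rewrite IH by (intros; apply H; lia). rewrite H by lia. reflexivity.
Qed.

Lemma fsum_le g h K : (forall i, (1 <= i <= K)%nat -> g i <= h i) -> fsum g K <= fsum h K.
Proof.
  induction K as [|K IH]; intros H; simpl; [lra|].
  apply Rplus_le_compat; [apply IH; intros; apply H; lia | apply H; lia].
Qed.

Lemma fsum_plus g h K : fsum (fun i => g i + h i) K = fsum g K + fsum h K.
Proof. induction K as [|K IH]; simpl; [ring|rewrite IH; ring]. Qed.

Lemma fsum_scal c g K : fsum (fun i => c * g i) K = c * fsum g K.
Proof. induction K as [|K IH]; simpl; [ring|rewrite IH; ring]. Qed.

Lemma fsum_ind g j K :
  fsum (fun i => if Nat.eqb i j then g i else 0) K = if andb (Nat.leb j K) (Nat.leb 1 j) then g j else 0.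
Proof.
  induction K as [|K IH]; cbn [fsum].
  - destruct j; simpl; reflexivity.
  - rewrite IH. destruct (Nat.eqb_spec (S K) j) as [E|E].
    + subst j. rewrite Nat.leb_refl. replace (Nat.leb (S K) K) with false by (symmetry; apply Nat.leb_gt; lia).
      simpl. ring.
    + destruct (Nat.leb_spec j K); destruct (Nat.leb_spec j (S K)); destruct (Nat.leb_spec 1 j); simpl;
        try ring; lia.
Qed.

Lemma fsum_ind_le g j K : 0 <= g j -> fsum (fun i => if Nat.eqb i j then g i else 0) K <= g j.
Proof. intros H. rewrite fsum_ind. destruct (andb _ _); lra. Qed.

Lemma fsum_id K : fsum INR K = INR K * (INR K + 1) / 2.
Proof. induction K as [|K IH]; cbn [fsum]; [simpl; field|rewrite IH, S_INR; field]. Qed.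

Lemma RInt_fsum (h : nat -> R -> R) K : (forall i, ex_RInt (h i) 0 1) ->
  ex_RInt (fun t => fsum (fun i => h i t) K) 0 1 /\
  RInt (fun t => fsum (fun i => h i t) K) 0 1 = fsum (fun i => RInt (h i) 0 1) K.
Proof.
  intros Hh. induction K as [|K [IH1 IH2]]; simpl.
  - split. apply ex_RInt_ext with (f := fun _ => 0). intros; reflexivity. apply ex_RInt_const.
    apply RInt_zero_ext. intros; reflexivity.
  - pose proof (RInt_lin _ _ 0 1 1 1 IH1 (Hh (S K))) as H.
    split.
    + eapply ex_RInt_ext; [|eexists; exact H]. intros x _. simpl. ring.
    + rewrite <- IH2.
      transitivity (1 * RInt (fun t => fsum (fun i => h i t) K) 0 1 + 1 * RInt (h (S K)) 0 1); [|ring].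
      rewrite <- (is_RInt_unique _ _ _ _ H).
      apply RInt_ext. intros; match goal with |- ?l = ?r => change (@eq R l r) end; ring.
Qed.

Lemma key_id M t u :
  INR M * t ^ 2 * u ^ (M + 2) - INR (S M) * t ^ 3 * u ^ (M + 1) + t ^ (M + 3) * u =
  (u - t) ^ 2 * fsum (fun i => INR i * t ^ (M + 2 - i) * u ^ i) M.
Proof.
  induction M as [|M IH].
  - simpl. ring.
  - assert (HF : fsum (fun i => INR i * t ^ (S M + 2 - i) * u ^ i) (S M) =
       t * fsum (fun i => INR i * t ^ (M + 2 - i) * u ^ i) M + INR (S M) * t ^ 2 * u ^ (S M)).
    { cbn [fsum]. rewrite <- fsum_scal. f_equal.
      - apply fsum_ext_range. intros i Hi. replace (S M + 2 - i)%nat with (S (M + 2 - i)) by lia.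
        change (t ^ S (M + 2 - i)) with (t * t ^ (M + 2 - i)). ring.
      - replace (S M + 2 - S M)%nat with 2%nat by lia. reflexivity. }
    rewrite HF.
    set (F := fsum (fun i => INR i * t ^ (M + 2 - i) * u ^ i) M) in *.
    replace ((u - t) ^ 2 * (t * F + INR (S M) * t ^ 2 * u ^ S M))
      with (t * ((u - t) ^ 2 * F) + (u - t) ^ 2 * (INR (S M) * t ^ 2 * u ^ S M)) by ring.
    rewrite <- IH.
    change (u ^ S M) with (u * u ^ M).
    replace (S M + 2)%nat with (M + 3)%nat by lia.
    replace (S M + 1)%nat with (M + 2)%nat by lia.
    replace (S M + 3)%nat with (M + 4)%nat by lia.
    rewrite !pow_add. rewrite !S_INR.
    set (A := u ^ M). set (B := t ^ M). ring.
Qed.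

Definition lterm (M i : nat) (t : R) : R :=
  INR i * (t ^ (M + 2 - i + 2) * (1 - t) ^ i) + INR i * (t ^ (M + 2 - i) * (1 - t) ^ (i + 2)).

Lemma integrand_last M t : 0 < t < 1 -> t <> 1/2 ->
  Phi_integrand (M + 4) (1 - 1 / INR (M + 4)) t = fsum (fun i => lterm M i t) M.
Proof.
  intros Ht Hh. unfold Phi_integrand.
  assert (HN : INR (M + 4) <> 0) by (apply not_0_INR; lia).
  replace (INR (M + 4) * (1 - 1 / INR (M + 4))) with (INR (M + 3))
    by (rewrite !plus_INR; simpl; field; pose proof (pos_INR M); lra).
  replace (INR (M + 4) * (1 - (1 - 1 / INR (M + 4)))) with 1 by (field; exact HN).
  rewrite Rpower_pow by lra. rewrite Rpower_1 by lra.
  replace (INR (M + 3) - 3) with (INR M) by (rewrite plus_INR; simpl; ring).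
  replace (INR (M + 3) - 2) with (INR (S M)) by (rewrite plus_INR, S_INR; simpl; ring).
  replace (M + 4 - 2)%nat with (M + 2)%nat by lia.
  replace (M + 4 - 3)%nat with (M + 1)%nat by lia.
  replace (1 - 2 * t) with ((1 - t) - t) by ring.
  rewrite key_id.
  set (F := fsum (fun i => INR i * t ^ (M + 2 - i) * (1 - t) ^ i) M).
  assert (Hd : (1 - t) - t <> 0) by (intro; apply Hh; lra).
  replace ((t ^ 2 + (1 - t) ^ 2) * ((1 - t - t) ^ 2 * F / (1 - t - t) ^ 2)) with ((t ^ 2 + (1 - t) ^ 2) * F)
    by (field; exact Hd).
  unfold F. rewrite <- fsum_scal. apply fsum_ext_range. intros i Hi. unfold lterm.
  rewrite !pow_add. set (A := t ^ (M + 2 - i)). set (B := (1 - t) ^ i). ring.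
Qed.

Lemma lterm_int M i : ex_RInt (lterm M i) 0 1 /\
  RInt (lterm M i) 0 1 = INR i * (beta (M + 2 - i + 2) i + beta (M + 2 - i) (i + 2)).
Proof.
  pose proof (RInt_lin _ _ 0 1 (INR i) (INR i) (beta_ex (M + 2 - i + 2) i) (beta_ex (M + 2 - i) (i + 2))) as H.
  split.
  - eexists. exact H.
  - unfold lterm. rewrite (is_RInt_unique _ _ _ _ H). unfold beta. match goal with |- ?l = ?r => change (@eq R l r) end. ring.
Qed.

Lemma fact_ineq a b : (fact (a + 3) * fact (b + 3) <= 6 * fact (a + b + 3))%nat.
Proof.
  induction b as [|b IH].
  - rewrite Nat.add_0_r. simpl (fact (0 + 3)). lia.
  - replace (S b + 3)%nat with (S (b + 3)) by lia.
    replace (a + S b + 3)%nat with (S (a + b + 3)) by lia.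
    rewrite !fact_simpl. nia.
Qed.

Lemma beta_bound3 p q : (3 <= p)%nat -> (3 <= q)%nat ->
  beta p q <= 6 * INR (fact (p + q - 3)) / INR (fact (S (p + q))).
Proof.
  intros Hp Hq. rewrite beta_val.
  destruct (Nat.le_exists_sub 3 p Hp) as [a [Ha _]]. destruct (Nat.le_exists_sub 3 q Hq) as [b [Hb _]].
  subst p q. replace (a + 3 + (b + 3) - 3)%nat with (a + b + 3)%nat by lia.
  unfold Rdiv. apply Rmult_le_compat_r.
  - apply Rlt_le, Rinv_0_lt_compat, INR_fact_pos.
  - rewrite <- mult_INR. replace 6 with (INR 6) by (simpl; ring). rewrite <- mult_INR.
    apply le_INR. apply fact_ineq.
Qed.

Section LastBound.
Variable M : nat.
Let D := INR (fact (M + 5)).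
Let A1 := INR (fact (M + 3)) / D.
Let A2 := 2 * INR (fact (M + 2)) / D.
Let C := INR (fact (M + 1)) / D.

Lemma D_pos : 0 < D. Proof. apply INR_fact_pos. Qed.
Lemma A1_nn : 0 <= A1. Proof. unfold A1. pose proof (INR_fact_pos (M+3)). pose proof D_pos. apply Rlt_le, Rdiv_lt_0_compat; lra. Qed.
Lemma A2_nn : 0 <= A2. Proof. unfold A2. pose proof (INR_fact_pos (M+2)). pose proof D_pos. apply Rlt_le, Rdiv_lt_0_compat; lra. Qed.
Lemma C_nn : 0 <= C. Proof. unfold C. pose proof (INR_fact_pos (M+1)). pose proof D_pos. apply Rlt_le, Rdiv_lt_0_compat; lra. Qed.

Lemma b1_bound i : (1 <= i <= M)%nat ->
  beta (M + 2 - i + 2) i <= (if Nat.eqb i 1 then A1 else 0) + (if Nat.eqb i 2 then A2 else 0) + 6 * C.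
Proof.
  intros Hi. pose proof A1_nn. pose proof A2_nn. pose proof C_nn.
  destruct (Nat.eqb_spec i 1) as [E1|E1]; [|destruct (Nat.eqb_spec i 2) as [E2|E2]].
  - subst i. replace (M + 2 - 1 + 2)%nat with (M + 3)%nat by lia. rewrite beta_val.
    replace (S (M + 3 + 1)) with (M + 5)%nat by lia. simpl (INR (fact 1)).
    change (Nat.eqb 1 2) with false. unfold A1. fold D. unfold Rdiv. lra.
  - subst i. replace (M + 2 - 2 + 2)%nat with (M + 2)%nat by lia. rewrite beta_val.
    replace (S (M + 2 + 2)) with (M + 5)%nat by lia. simpl (INR (fact 2)).
    unfold A2. fold D. lra.
  - pose proof (beta_bound3 (M + 2 - i + 2) i ltac:(lia) ltac:(lia)) as H3.
    replace (M + 2 - i + 2 + i - 3)%nat with (M + 1)%nat in H3 by lia.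
    replace (S (M + 2 - i + 2 + i)) with (M + 5)%nat in H3 by lia.
    fold D in H3. unfold C. lra.
Qed.

Lemma b2_bound i : (1 <= i <= M)%nat ->
  beta (M + 2 - i) (i + 2) <= (if Nat.eqb i M then A2 else 0) + 6 * C.
Proof.
  intros Hi. pose proof A2_nn. pose proof C_nn.
  destruct (Nat.eqb_spec i M) as [E|E].
  - subst i. replace (M + 2 - M)%nat with 2%nat by lia. rewrite beta_val.
    replace (S (2 + (M + 2))) with (M + 5)%nat by lia. simpl (INR (fact 2)).
    unfold A2. fold D. lra.
  - pose proof (beta_bound3 (M + 2 - i) (i + 2) ltac:(lia) ltac:(lia)) as H3.
    replace (M + 2 - i + (i + 2) - 3)%nat with (M + 1)%nat in H3 by lia.
    replace (S (M + 2 - i + (i + 2))) with (M + 5)%nat in H3 by lia.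
    fold D in H3. unfold C. lra.
Qed.

Lemma sum_bound :
  fsum (fun i => INR i * (beta (M + 2 - i + 2) i + beta (M + 2 - i) (i + 2))) M <=
  A1 + 2 * A2 + INR M * A2 + 12 * C * (INR M * (INR M + 1) / 2).
Proof.
  pose proof A1_nn. pose proof A2_nn. pose proof C_nn.
  eapply Rle_trans.
  { apply fsum_le with (h := fun i =>
      (if Nat.eqb i 1 then INR i * A1 else 0) + (if Nat.eqb i 2 then INR i * A2 else 0) +
      (if Nat.eqb i M then INR i * A2 else 0) + 12 * C * INR i).
    intros i Hi. pose proof (b1_bound i Hi). pose proof (b2_bound i Hi).
    assert (Hii : 0 <= INR i) by apply pos_INR.
    apply Rle_trans with (INR i * (((if Nat.eqb i 1 then A1 else 0) + (if Nat.eqb i 2 then A2 else 0) + 6 * C) +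
                                   ((if Nat.eqb i M then A2 else 0) + 6 * C))).
    - apply Rmult_le_compat_l; lra.
    - right. destruct (Nat.eqb i 1), (Nat.eqb i 2), (Nat.eqb i M); ring. }
  rewrite !fsum_plus. rewrite fsum_scal, fsum_id.
  pose proof (fsum_ind_le (fun i => INR i * A1) 1 M ltac:(simpl; lra)) as I1.
  pose proof (fsum_ind_le (fun i => INR i * A2) 2 M ltac:(simpl; nra)) as I2.
  pose proof (fsum_ind_le (fun i => INR i * A2) M M ltac:(pose proof (pos_INR M); nra)) as I3.
  simpl in I1, I2. cbv beta in I3.
  replace (INR 2) with 2 in I2 by (simpl; ring).
  lra.
Qed.

Lemma last_bound :
  (INR (M + 4) + 1) * fsum (fun i => INR i * (beta (M + 2 - i + 2) i + beta (M + 2 - i) (i + 2))) M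
  <= 16 / INR (M + 4).
Proof.
  eapply Rle_trans.
  { apply Rmult_le_compat_l; [pose proof (pos_INR (M + 4)); lra | apply sum_bound]. }
  unfold A1, A2, C, D.
  replace (M + 5)%nat with (S (S (S (S (M + 1))))) by lia.
  replace (M + 3)%nat with (S (S (M + 1))) by lia.
  replace (M + 2)%nat with (S (M + 1)) by lia.
  rewrite !fact_S_INR. rewrite !S_INR. rewrite !plus_INR.
  pose proof (INR_fact_pos (M + 1)) as HF.
  pose proof (pos_INR M) as HM.
  remember (INR M) as K. remember (INR (fact (M + 1))) as F.
  simpl (INR 1). simpl (INR 4).
  set (X := (K + 1 + 1 + 1) * (K + 1 + 1) + 4 * (K + 1 + 1) + 2 * K * (K + 1 + 1) + 6 * K * (K + 1)).
  assert (E : forall Y, Y = X / ((K + 4) * (K + 3) * (K + 2)) -> Y <= 16 / (K + 4)).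
  { intros Y ->. apply Rminus_le_0 with (r2 := 16 / (K + 4)) (r1 := X / ((K + 4) * (K + 3) * (K + 2))) || idtac.
    assert (16 / (K + 4) - X / ((K + 4) * (K + 3) * (K + 2)) = (16 * (K + 3) * (K + 2) - X) / ((K + 4) * (K + 3) * (K + 2)))
      by (field; lra).
    assert (0 <= (16 * (K + 3) * (K + 2) - X) / ((K + 4) * (K + 3) * (K + 2))).
    { apply Rdiv_le_0_compat; [unfold X; nra | nra]. }
    lra. }
  replace (K + (1 + 1 + 1 + 1)) with (K + 4) by ring.
  apply E. unfold X. field. nra.
Qed.
End LastBound.

Lemma Phi_last n : (3 <= n)%nat -> Phi n (1 - 1 / INR n) <= 16 / INR n.
Proof.
  intros hn.
  assert (HN : 3 <= INR n) by (replace 3 with (INR 3) by (simpl; ring); apply le_INR; exact hn).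
  destruct (Nat.eq_dec n 3) as [E3|E3].
  - subst n. replace (1 - 1 / INR 3) with (2 / INR 3) by (simpl; field).
    rewrite Phi_2 by lia. apply Rdiv_le_0_compat; lra.
  - destruct (Nat.le_exists_sub 4 n ltac:(lia)) as [M [HM _]]. subst n.
    unfold Phi.
    assert (Hl : forall i, ex_RInt (lterm M i) 0 1) by (intros i; apply (lterm_int M i)).
    destruct (RInt_fsum (lterm M) M Hl) as [Hex Heq].
    rewrite (RInt_ext_split _ (fun t => fsum (fun i => lterm M i t) M)).
    2:{ intros t Ht Hh. apply integrand_last; auto. }
    2:{ exact Hex. }
    rewrite Heq.
    rewrite (fsum_ext_range _ (fun i => INR i * (beta (M + 2 - i + 2) i + beta (M + 2 - i) (i + 2)))).
    2:{ intros i _. apply (lterm_int M i). }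
    apply last_bound.
Qed.

Theorem proposition3p4 (n : nat) (hn : (3 <= n)%nat) :
  convex_on (Phi n) 0 1 /\
  (forall x, 1 / INR n <= x <= 1 - 1 / INR n ->
     - (4 / INR n) <= Phi n x <= 16 / INR n).
Proof.
  assert (cvx : convex_on (Phi n) 0 1).
  { apply cvx_of_int. intros x Hx. apply int_Phi; auto. }
  split; [exact cvx|].
  apply final_bounds; auto.
  - apply Phi_1; auto.
  - apply Phi_2; auto.
  - apply Phi_3; auto.
  - apply Phi_last; auto.
Qed.
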